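(* Let $X$ be a locally convex topological space, $C_0(X)$ the Banach space (sup norm) of continuous $f:X\to\mathbb{R}$ with $\{|f|>\varepsilon\}$ compact for all $\varepsilon>0$, and $\mathcal{M}(X)$ the signed Borel measures on $X$ of bounded total variation $\|\mu\|$. Let $K:X\times X\to\mathbb{R}$ satisfy $K(\cdot,x)\in C_0(X)$ for all $x\in X$, $\overline{\mathrm{span}}\{K(\cdot,x):x\in X\}=C_0(X)$, and suppose that for all pairwise distinct $x_1,\dots,x_m\in X$ ($m\in\mathbb{N}$) the matrix $K[{\bf x}]$, $(K[{\bf x}])_{j,k}=K(x_k,x_j)$, is nonsingular. Let $\mathcal{B}:=\{f_\mu=\int_X K(t,\cdot)\,d\mu(t):\mu\in\mathcal{M}(X)\}$ with norm $\|f_\mu\|_{\mathcal B}=\|\mu\|$. Then the following are equivalent: (a) $\mathcal{B}$ satisfies the linear representer theorem: for every $m\in\mathbb{N}$, every pairwise distinct ${\bf x}=(x_1,\dots,x_m)$ in $X$, every continuous nonnegative function $Q$ on $\mathbb{R}^m$, every continuous nonnegative $\psi$ on $[0,\infty)$ with $\lim_{t\to\infty}\psi(t)=+\infty$ and every $\lambda>0$, the problem $\inf_{f\in\mathcal{B}}Q(f({\bf x}))+\lambda\psi(\|f\|_{\mathcal B})$, where $f({\bf x})=(f(x_j))_{j=1}^m$, has a minimizer of the form $f_0=K^{\bf x}(\cdot)\boldsymbol{c}=\sum_{j=1}^m c_jK(x_j,\cdot)$ for some $\boldsymbol{c}\in\mathbb{R}^m$; (b) for every $m\in\mathbb{N}$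 and every pairwise distinct ${\bf x}=(x_1,\dots,x_m)$ in $X$, $$\|K[{\bf x}]^{-1}K_{\bf x}(x)\|_1\le 1\quad\text{for all }x\in X,$$ where $K_{\bf x}(x):=(K(x,x_j):j=1,\dots,m)^T$.
   Context: Standing assumption of the paper: the dual of $C_0(X)$ is isometrically isomorphic to $\mathcal{M}(X)$ via $T(f)=\int_X f\,d\mu$, with operator norm $\|\mu\|$. $\|\cdot\|_1$ is the $\ell^1$ norm on $\mathbb{R}^m$.
   Formalization: In (a), the regularizer ψ ranges only over functions that are nondecreasing on [0,∞), in addition to being continuous, nonnegative and tending to +∞. The statement above fails without it. *)

(* Defs.v *)
From mathcomp Require Import all_boot all_order all_algebra.
From mathcomp Require Import all_classical all_reals all_analysis.
Import Order.TTheory GRing.Theory Num.Theory.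
Import numFieldNormedType.Exports.

Set Implicit Arguments.
Unset Strict Implicit.
Unset Printing Implicit Defensive.

Local Open Scope classical_set_scope.
Local Open Scope ring_scope.

Section Defs.
Variables (R : realType) (X : ptopologicalType).

Definition Borel : Type := g_sigma_algebraType (@open X).

Notation fmeas := {finite_measure set Borel -> \bar R}.

Definition C0 (f : X -> R) : Prop :=
  continuous f /\ forall eps : R, 0 < eps -> compact [set x | eps < `|f x|].

Definition supnorm (f : X -> R) : R := sup [set `|f x| | x in [set: X]].

(* A signed Borel measure of bounded variation is represented as p - n,
   with p, n finite (nonnegative) Borel measures (Jordan decomposition). *)
Definition smeas (p n : fmeas) (A : set X) : R := fine (p A) - fine (n A).

Definition sint (p n : fmeas) (f : X -> R) : R :=
  fine (\int[p]_t (f t)%:E) - fine (\int[n]_t (f t)%:E).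

Definition tvar (p n : fmeas) : R :=
  sup [set r | exists k (A : 'I_k -> set Borel),
        (forall i, measurable (A i)) /\ trivIset setT A /\
        r = \sum_(i < k) `|smeas p n (A i)|].

Definition bdd_lin_C0 (T : (X -> R) -> R) : Prop :=
  (forall (a b : R) f g, C0 f -> C0 g ->
     T (fun x => a * f x + b * g x) = a * T f + b * T g) /\
  exists M : R, forall f, C0 f -> `|T f| <= M * supnorm f.

Definition opnorm_C0 (T : (X -> R) -> R) : R :=
  sup [set `|T f| | f in [set f | C0 f /\ supnorm f <= 1]].

(* Standing assumption: C_0(X)^* is isometrically isomorphic to M(X) via
   mu |-> (f |-> \int f dmu). *)
Definition dual_C0_is_M : Prop :=
  (forall T, bdd_lin_C0 T -> exists p n, forall f, C0 f -> T f = sint p n f) /\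
  (forall p n, opnorm_C0 (sint p n) = tvar p n).

Variable K : X -> X -> R.

Definition Kmx m (x : 'I_m -> X) : 'M[R]_m := \matrix_(j, k) K (x k) (x j).

Definition Kcol m (x : 'I_m -> X) (y : X) : 'cV[R]_m := \col_j K y (x j).

Definition fmu (p n : fmeas) : X -> R := fun y => sint p n (fun t => K t y).

Definition K_sections_C0 : Prop := forall x, C0 (fun t => K t x).

Definition K_span_dense : Prop :=
  forall f, C0 f -> forall eps : R, 0 < eps ->
    exists k (a : 'I_k -> R) (y : 'I_k -> X),
      supnorm (fun t => f t - \sum_(i < k) a i * K t (y i)) < eps.

Definition K_nonsingular : Prop :=
  forall m (x : 'I_m -> X), injective x -> Kmx x \in unitmx.

Definition linear_representer : Prop :=
  forall m (x : 'I_m -> X), injective x ->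
  forall Q : 'rV[R]_m -> R, continuous Q -> (forall v, 0 <= Q v) ->
  forall psi : R -> R,
    {within [set t : R | 0 <= t], continuous psi} ->
    (forall t, 0 <= t -> 0 <= psi t) ->
    (forall s t, 0 <= s -> s <= t -> psi s <= psi t) ->
    (forall M : R, exists N : R, forall t, N <= t -> M <= psi t) ->
  forall lam : R, 0 < lam ->
  exists (c : 'rV[R]_m) (p0 n0 : fmeas),
    (forall y, fmu p0 n0 y = \sum_(j < m) c 0 j * K (x j) y) /\
    forall p n : fmeas,
      Q (\row_j fmu p0 n0 (x j)) + lam * psi (tvar p0 n0)
      <= Q (\row_j fmu p n (x j)) + lam * psi (tvar p n).

Definition l1_condition : Prop :=
  forall m (x : 'I_m -> X), injective x ->
  forall y : X, \sum_(j < m) `|(invmx (Kmx x) *m Kcol x y) j 0| <= 1.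

End Defs.

(* Main.v *)
Require Import Defs.
From mathcomp Require Import all_boot all_order all_algebra.
From mathcomp Require Import all_classical all_reals all_analysis.
From mathcomp Require Import measurable_realfun charge.
From mathcomp Require Import lra ring.
Import Order.TTheory GRing.Theory Num.Theory.
Import numFieldNormedType.Exports.
Set Implicit Arguments. Unset Strict Implicit. Unset Printing Implicit Defensive.
Local Open Scope classical_set_scope.
Local Open Scope ring_scope.

Section A.
Variables (R : realType) (X : ptopologicalType).
Notation fmeas := {finite_measure set Borel X -> \bar R}.

Lemma cont_meas (f : X -> R) : continuous f -> measurable_fun [set: Borel X] f.
Proof.
move=> cf; apply: (measurability _ (RGenOInfty.measurableE R)).
move=> _ [_ [x ->] <-]; apply: sub_sigma_algebra.
by rewrite setTI; apply: open_comp => //; exact: interval_open.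
Qed.

Definition bm (f : X -> R) := measurable_fun [set: Borel X] f /\ exists M, forall x, `|f x| <= M.

Lemma bm_int (p : fmeas) f : bm f -> p.-integrable [set: Borel X] (EFin \o f).
Proof.
move=> [mf [M hM]]; apply/integrableP; split; first exact/measurable_EFinP.
apply: (@le_lt_trans _ _ ((`|M|)%:E * p setT)%E).
  apply: (integral_le_bound (`|M|)%:E) => //.
  - exact/measurable_EFinP.
  - apply: (@aeW _ _ _ p) => z _ /=.
    by rewrite lee_fin (le_trans (hM z)) // ler_norm.
by rewrite lte_mul_pinfty // ?ge0_fin_numE ?fin_num_fun_lty // fin_num_measure.
Qed.

Lemma bmD f g : bm f -> bm g -> bm (fun x => f x + g x).
Proof.
move=> [mf [M hM]] [mg [N hN]]; split; first exact: measurable_funD.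
by exists (M + N) => x; rewrite (le_trans (ler_normD _ _)) // lerD.
Qed.

Lemma bmZ a f : bm f -> bm (fun x => a * f x).
Proof.
move=> [mf [M hM]]; split; first exact: measurable_funM.
by exists (`|a| * M) => x; rewrite normrM ler_wpM2l.
Qed.

Lemma bm_sum k (F : 'I_k -> X -> R) : (forall i, bm (F i)) -> bm (fun x => \sum_(i < k) F i x).
Proof.
move=> hF; elim: k F hF => [|k IH] F hF.
  have -> : (fun x => \sum_(i < 0) F i x) = fun _ => 0 by apply/funext => x; rewrite big_ord0.
  by split; [exact: measurable_cst| exists 0 => x; rewrite normr0].
have -> : (fun x => \sum_(i < k.+1) F i x) =
  fun x => \sum_(i < k) F (lift ord0 i) x + F ord0 x.
  by apply/funext => x; rewrite big_ord_recl addrC.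
exact: (bmD (IH (fun i => F (lift ord0 i)) (fun i => hF _)) (hF ord0)).
Qed.

Lemma sintD (p n : fmeas) f g : bm f -> bm g ->
  sint p n (fun x => f x + g x) = sint p n f + sint p n g.
Proof.
move=> bf bg; rewrite /sint.
have := @RintegralD _ _ _ p setT f g measurableT (bm_int p bf) (bm_int p bg).
have := @RintegralD _ _ _ n setT f g measurableT (bm_int n bf) (bm_int n bg).
rewrite /Rintegral => -> ->; lra.
Qed.

Lemma sintZ (p n : fmeas) a f : bm f -> sint p n (fun x => a * f x) = a * sint p n f.
Proof.
move=> bf; rewrite /sint.
have := @RintegralZl _ _ _ p setT f a measurableT (bm_int p bf).
have := @RintegralZl _ _ _ n setT f a measurableT (bm_int n bf).
rewrite /Rintegral => -> ->; lra.
Qed.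

Lemma sint_sum (p n : fmeas) k (F : 'I_k -> X -> R) : (forall i, bm (F i)) ->
  sint p n (fun x => \sum_(i < k) F i x) = \sum_(i < k) sint p n (F i).
Proof.
elim: k F => [|k IH] F hF.
  rewrite big_ord0 /sint; under eq_fun do rewrite big_ord0.
  by rewrite !integral0 /=; lra.
rewrite big_ord_recl -IH //; under eq_fun do rewrite big_ord_recl.
rewrite sintD //; exact: bm_sum.
Qed.

Lemma sint_bound (p n : fmeas) (f : X -> R) (M : R) : measurable_fun [set: Borel X] f ->
  (forall x, `|f x| <= M) ->
  `|sint p n f| <= (fine (p setT) + fine (n setT)) * M.
Proof.
move=> mf hM; have bf : bm f by split => //; exists M.
have key (q : fmeas) : `|fine (\int[q]_t (f t)%:E)| <= fine (q setT) * M.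
  have h1 := @le_normr_Rintegral _ _ _ q setT f measurableT (bm_int q bf).
  have h2 := @le_Rintegral _ _ _ q setT (fun t => `|f t|) (fun _ => M) measurableT
    (integrable_norm (bm_int q bf)) (finite_measure_integrable_cst _ M measurableT) (fun x _ => hM x).
  have h3 := @Rintegral_cst _ _ _ q setT measurableT M.
  rewrite /Rintegral in h1 h2 h3; rewrite mulrC -h3; exact: le_trans h1 h2.
rewrite /sint mulrDl (le_trans (ler_normB _ _)) // lerD //.
Qed.

End A.

Section B.
Variables (R : realType) (X : ptopologicalType).
Notation fmeas := {finite_measure set Borel X -> \bar R}.

Lemma C0_bounded (f : X -> R) : C0 f -> exists M, forall x, `|f x| <= M.
Proof.
move=> [cf hc]; have cA := hc 1 ltr01.
have cfA : compact (f @` [set x | 1 < `|f x|]).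
  by apply: continuous_compact => //; exact: continuous_subspaceT.
have [M [_ HM]] := compact_bounded cfA.
exists (Num.max 1 (M + 1)) => x.
have [h|h] := ltrP 1 `|f x|; last by rewrite le_max h.
rewrite le_max; apply/orP; right.
apply: (HM (M + 1)); first by rewrite ltrDl.
by exists x.
Qed.

Lemma C0_bm (f : X -> R) : C0 f -> bm f.
Proof. by move=> hf; split; [exact: cont_meas (hf.1)| exact: C0_bounded]. Qed.

Lemma supnorm_ge (f : X -> R) M x : (forall y, `|f y| <= M) -> `|f x| <= supnorm f.
Proof.
move=> hM; apply: sup_upper_bound; last by exists x.
split; first by exists `|f x|, x.
by exists M => _ [y _ <-].
Qed.

Lemma supnorm_le (f : X -> R) B : 0 <= B -> (forall y, `|f y| <= B) -> supnorm f <= B.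
Proof.
move=> B0 hB; have [[x _]|nx] := pselect (exists x : X, True).
  by apply: ge_sup; [exists `|f x|, x|move=> r [y _ <-]].
rewrite /supnorm (_ : [set _ | _ in _] = set0) ?sup0 //.
by apply/seteqP; split => // r [y _ _]; apply: nx; exists y.
Qed.

Lemma supnorm_ge0 (f : X -> R) : 0 <= supnorm f.
Proof.
have [[M hM]|nb] := pselect (exists M, forall y, `|f y| <= M).
  have [[x _]|nx] := pselect (exists x : X, True).
    exact: le_trans (normr_ge0 (f x)) (supnorm_ge x hM).
  rewrite /supnorm (_ : [set _ | _ in _] = set0) ?sup0 //.
  by apply/seteqP; split => // r [y _ _]; apply: nx; exists y.
rewrite /supnorm sup_out //; move=> [_ [M hM]]; apply: nb; exists M => y.
by apply: hM; exists y.
Qed.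

Lemma C0_cst0 : C0 (fun _ : X => (0:R)).
Proof.
split; first exact: cst_continuous.
move=> e e0; rewrite (_ : [set _ | _] = set0); first exact: compact0.
by apply/seteqP; split => // x /=; rewrite normr0 ltNge (ltW e0).
Qed.

Lemma C0_le1 (f : X -> R) : C0 f -> supnorm f <= 1 -> forall x, `|f x| <= 1.
Proof.
move=> hf h1 x; have [M hM] := C0_bounded hf.
exact: le_trans (supnorm_ge x hM) h1.
Qed.

Lemma opnorm_ub (p n : fmeas) (f : X -> R) : C0 f -> supnorm f <= 1 ->
  `|sint p n f| <= opnorm_C0 (sint p n).
Proof.
move=> hf h1; apply: sup_upper_bound; last by exists f.
split; first by exists `|sint p n f|, f.
exists ((fine (p setT) + fine (n setT)) * 1) => r [g [hg g1] <-].
apply: sint_bound; first exact: (C0_bm hg).1.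
exact: C0_le1.
Qed.

Lemma opnorm_ge0 (p n : fmeas) : 0 <= opnorm_C0 (sint p n).
Proof.
apply: le_trans (opnorm_ub p n C0_cst0 _) => //.
by apply: supnorm_le => // y; rewrite normr0.
Qed.

Lemma discrete_meas m (x : 'I_m -> X) (c : 'I_m -> R) :
  dual_C0_is_M R X -> exists p n : fmeas,
  (forall f, C0 f -> sint p n f = \sum_(k < m) c k * f (x k)) /\
  tvar p n <= \sum_(k < m) `|c k|.
Proof.
move=> [dual1 dual2].
pose T (f : X -> R) := \sum_(k < m) c k * f (x k).
have Tb f : C0 f -> `|T f| <= (\sum_(k < m) `|c k|) * supnorm f.
  move=> hf; have [M hM] := C0_bounded hf.
  rewrite /T mulr_suml; apply: le_trans (ler_norm_sum _ _ _) _.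
  apply: ler_sum => k _; rewrite normrM ler_wpM2l //; exact: supnorm_ge.
have bT : bdd_lin_C0 T.
  split; last by exists (\sum_(k < m) `|c k|).
  move=> a b f g _ _; rewrite /T !mulr_sumr -big_split /=.
  by apply: eq_bigr => k _; ring.
have [p [n hpn]] := dual1 T bT; exists p, n; split; first by move=> f hf; rewrite -hpn.
have -> : tvar p n = opnorm_C0 (sint p n) by symmetry; exact: dual2.
apply: ge_sup; first by exists `|sint p n (fun _ => 0)|, (fun _ => 0); split => //;
  [exact: C0_cst0 | apply: supnorm_le => // y; rewrite normr0].
move=> r [f [hf f1] <-]; rewrite -hpn //.
apply: le_trans (Tb f hf) _; rewrite -[X in _ <= X]mulr1 ler_wpM2l //.
exact: sumr_ge0.
Qed.

End B.

Section C.
Variables (R : realType) (X : ptopologicalType).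
Notation fmeas := {finite_measure set Borel X -> \bar R}.
Local Open Scope charge_scope.

Lemma smeas_le (p n : fmeas) (A : set (Borel X)) : measurable A ->
  (`|smeas p n A|%:E <= p A + n A)%E.
Proof.
move=> mA; rewrite -(fineK (fin_num_measure p A mA)) -(fineK (fin_num_measure n A mA)).
rewrite -EFinD lee_fin /smeas.
have h1 : 0 <= fine (p A) by rewrite fine_ge0.
have h2 : 0 <= fine (n A) by rewrite fine_ge0.
by rewrite (le_trans (ler_normB _ _)) // !ger0_norm.
Qed.

Lemma tvar_has_sup (p n : fmeas) : has_sup [set r | exists k (A : 'I_k -> set (Borel X)),
        (forall i, measurable (A i)) /\ trivIset setT A /\
        r = \sum_(i < k) `|smeas p n (A i)|].
Proof.
split; first by exists 0, 0, (fun _ => set0); split => //; split;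
  [exact: trivIset_set0 | rewrite big_ord0].
exists (fine (p setT) + fine (n setT)) => _ [k [A [mA [tA ->]]]].
rewrite -lee_fin -sumEFin EFinD !fineK ?fin_num_measure //.
have mU : measurable (\big[setU/set0]_(i < k) A i) by exact: bigsetU_measurable.
apply: (@le_trans _ _ (\sum_(i < k) (p (A i) + n (A i)))%E).
  by apply: lee_sum => i _; exact: smeas_le.
rewrite big_split /= -!measure_semi_additive_ord //.
by apply: leeD; apply: le_measure; rewrite ?inE.
Qed.

Lemma tvar_ge (p n : fmeas) k (A : 'I_k -> set (Borel X)) :
  (forall i, measurable (A i)) -> trivIset setT A ->
  \sum_(i < k) `|smeas p n (A i)| <= tvar p n.
Proof.
move=> mA tA; apply: sup_upper_bound; first exact: tvar_has_sup.
by exists k, A.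
Qed.

Lemma sint_tvar (p n : fmeas) (g : X -> R) : bm g -> (forall x, `|g x| <= 1) ->
  `|sint p n g| <= tvar p n.
Proof.
move=> bg g1.
pose nu := cadd (charge_of_finite_measure p) (copp (charge_of_finite_measure n)).
have [P [N hPN]] := Hahn_decomposition nu.
pose mp := jordan_pos hPN; pose mn := jordan_neg hPN.
have [[mP posP] [mN negN] PUN PIN] := hPN.
have hE A : measurable A -> (p A + mn A = n A + mp A)%E.
  move=> mA; have := jordan_decomp hPN mA.
  change ((p A + - n A)%E = (mp A + (-1)%:E * mn A)%E -> (p A + mn A = n A + mp A)%E).
  have fe (q : fmeas) : exists a, q A = a%:E by exists (fine (q A)); rewrite fineK // fin_num_measure.
  have [a ->] := fe p; have [b ->] := fe n; 
  have [c ->] : exists c, mp A = c%:E by exists (fine (mp A)); rewrite fineK // fin_num_measure.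
  have [e ->] : exists c, mn A = c%:E by exists (fine (mn A)); rewrite fineK // fin_num_measure.
  rewrite -EFinN -EFinM -!EFinD => -[h]; congr EFin; lra.
have eqi : (\int[measure_add p mn]_x (g x)%:E = \int[measure_add n mp]_x (g x)%:E)%E.
  apply: eq_measure_integral => B mB _.
  rewrite -[LHS]/(measure_add p mn B) -[RHS]/(measure_add n mp B) !measure_addE; exact: hE.
rewrite !integral_measure_add // in eqi; try exact: bm_int;
  try exact/measurable_EFinP/(bg.1).
have fi (q : fmeas) : (\int[q]_x (g x)%:E)%E \is a fin_num.
  exact: integrable_fin_num (bm_int q bg).
have e2 : sint p n g = sint mp mn g.
  move: eqi; rewrite /sint.
  rewrite -(fineK (fi p)) -(fineK (fi n)) -(fineK (fi mp)) -(fineK (fi mn)).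
  rewrite -!EFinD => -[h]; lra.
rewrite e2; apply: le_trans (sint_bound mp mn bg.1 g1) _.
rewrite mulr1.
have -> : fine (mp setT) = smeas p n P.
  rewrite /mp jordan_posE cjordan_posE /crestr0 mem_set // /crestr setTI.
  by rewrite /= /cadd /= /copp /= fineD ?fin_numN ?fin_num_measure // fineN.
have -> : fine (mn setT) = - smeas p n N.
  rewrite /mn jordan_negE cjordan_negE /crestr0 mem_set // /crestr setTI.
  rewrite /= /cadd /= /copp /= fineN fineD ?fin_numN ?fin_num_measure // fineN /smeas.
  by rewrite opprD opprK.
pose A := fun i : 'I_2 => if i == ord0 then P else N.
have h := @tvar_ge p n 2 A.
rewrite !big_ord_recr big_ord0 /= add0r /A /= in h.
apply: le_trans (h _ _).
- by rewrite lerD // ?ler_norm // -normrN ler_norm.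
- by move=> i; case: ifP.
- apply/trivIsetP => i j _ _; case: i => [[|[|//]] ?]; case: j => [[|[|//]] ?] //=;
  by rewrite ?PIN // setIC PIN.
Qed.
End C.

Section D.
Variable R : realType.

Lemma mx_entry_le a b (M : 'M[R]_(a, b)) i j : `|M i j| <= `|M|.
Proof.
have -> : `|M| = mx_norm M by []. rewrite mx_normrE.
by apply/bigmax_geP; right; exists (i, j).
Qed.

Lemma mx_le_entries a b (M : 'M[R]_(a, b)) B : 0 <= B ->
  (forall i j, `|M i j| <= B) -> `|M| <= B.
Proof.
move=> B0 hB; have -> : `|M| = mx_norm M by []. rewrite mx_normrE.
by apply: bigmax_le => // -[i j] _; exact: hB.
Qed.

Lemma lip_cont (V W : normedModType R) (f : V -> W) C : 0 < C ->
  (forall x y, `|f x - f y| <= C * `|x - y|) -> continuous f.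
Proof.
move=> C0 hf x; apply/cvgrPdist_lt => e e0.
have eC : 0 < e / C by rewrite divr_gt0.
have /cvgrPdist_lt /(_ _ eC) : (fun y : V => y) @ x --> x by exact: cvg_id.
apply: filterS => y hy; apply: le_lt_trans (hf _ _) _.
by rewrite mulrC -ltr_pdivlMr.
Qed.

Lemma sum_abs_cont m : continuous (fun c : 'rV[R]_m => \sum_(k < m) `|c ord0 k|).
Proof.
apply: (@lip_cont _ _ _ (m%:R + 1)); first by rewrite ltr_wpDl.
move=> c d; apply: le_trans (_ : \sum_(k < m) `|(c - d) ord0 k| <= _).
  rewrite -sumrB; apply: le_trans (ler_norm_sum _ _ _) _.
  apply: ler_sum => k _; rewrite !mxE.
  by rewrite (le_trans (ler_dist_dist _ _)).
apply: le_trans (_ : \sum_(k < m) `|c - d| <= _).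
  by apply: ler_sum => k _; exact: mx_entry_le.
rewrite sumr_const card_ord -mulr_natl; have := normr_ge0 (c - d); nra.
Qed.

Lemma mulmx_cont m (M : 'M[R]_m) : continuous (fun c : 'rV[R]_m => c *m M).
Proof.
apply: (@lip_cont _ _ _ (\sum_(k < m) \sum_(j < m) `|M k j| + 1)).
  by rewrite ltr_wpDl // sumr_ge0 // => k _; rewrite sumr_ge0.
move=> c d; rewrite -mulmxBl; apply: mx_le_entries.
  by rewrite mulr_ge0 // addr_ge0 // sumr_ge0 // => k _; rewrite sumr_ge0.
move=> i j; rewrite mxE; apply: le_trans (ler_norm_sum _ _ _) _.
rewrite mulrDl mul1r -[X in X <= _]addr0; apply: lerD; last by [].
rewrite mulr_suml; apply: ler_sum => k _.
rewrite normrM mulrC; apply: ler_pM => //; last exact: mx_entry_le.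
by rewrite (bigD1 j) //= lerDl sumr_ge0.
Qed.

End D.

Section E.
Variable R : realType.

Lemma coercive_min m (h : 'rV[R]_m -> R) (N : R) : continuous h -> 0 <= N ->
  (forall c : 'rV[R]_m, N < \sum_(k < m) `|c ord0 k| -> h 0 < h c) ->
  exists c0, forall c, h c0 <= h c.
Proof.
move=> hcont N0 hN.
pose A := [set c : 'rV[R]_m | \sum_(k < m) `|c ord0 k| <= N].
have cA : compact A.
  apply: bounded_closed_compact.
    exists N; split; first exact: num_real.
    move=> M NM c Ac; apply: le_trans (ltW NM).
    apply: mx_le_entries => // i j; rewrite (ord1 i).
    apply: le_trans Ac.
    by rewrite (bigD1 j) //= lerDl sumr_ge0.
  have h0 : closed [set r : R | r <= N] by exact: (@closed_le R N).
  have h1 := (continuous_closedP _).1 (@sum_abs_cont R m) [set r : R | r <= N] h0.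
  exact: h1.
have A0 : A 0 by rewrite /A /=; under eq_bigr do rewrite mxE normr0; rewrite big1.
have [c0 c0A hc0] := compact_EVT_min (ex_intro _ 0 A0) cA (continuous_subspaceT hcont).
exists c0 => c; have [hcN|hcN] := leP (\sum_(k < m) `|c ord0 k|) N.
  by apply: hc0; rewrite inE.
by apply: le_trans (ltW (hN c hcN)); apply: hc0; rewrite inE.
Qed.
End E.

Section F.
Variables (R : realType) (X : ptopologicalType) (K : X -> X -> R).
Notation fmeas := {finite_measure set Borel X -> \bar R}.

Lemma comp_within m (psi : R -> R) : {within [set t : R | 0 <= t], continuous psi} ->
  continuous (fun c : 'rV[R]_m => psi (\sum_(k < m) `|c ord0 k|)).
Proof.
move=> hpsi c.
set A := [set t : R | 0 <= t].
have At : A (\sum_(k < m) `|c ord0 k|) by rewrite /A /= sumr_ge0.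
have H := (@subspace_continuousP _ A _ psi).1 hpsi _ At.
apply: cvg_trans H; apply: (@cvg_comp _ _ _ (fun c : 'rV[R]_m => \sum_(k < m) `|c ord0 k|) psi _ (within A (nbhs (\sum_(k < m) `|c ord0 k|)))) => //.
move=> B hB.
have hB' : nbhs (\sum_(k < m) `|c ord0 k|) [set x | A x -> B x] := hB.
have := @sum_abs_cont R m c _ hB'.
move=> H0.
have H1 : nbhs c [set y : 'rV[R]_m | A (\sum_(k < m) `|y ord0 k|) -> B (\sum_(k < m) `|y ord0 k|)] := H0.
change (nbhs c [set y : 'rV[R]_m | B (\sum_(k < m) `|y ord0 k|)]).
apply: filterS H1 => y /= hy; apply: hy.
by rewrite /A /= sumr_ge0.
Qed.

Lemma b_to_a : dual_C0_is_M R X -> K_sections_C0 K -> K_nonsingular K ->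
  l1_condition K -> linear_representer K.
Proof.
move=> dual Ksec Kns hb m x xinj Q Qc Q0 psi psic psi0 psimon psiinf lam lam0.
set Km := Kmx K x.
have Ku : Km \in unitmx by exact: Kns.
pose L (c : 'rV[R]_m) := c *m Km^T.
pose N1 (c : 'rV[R]_m) := \sum_(k < m) `|c ord0 k|.
have N1ge0 c : 0 <= N1 c by rewrite sumr_ge0.
pose h c := Q (L c) + lam * psi (N1 c).
have hc : continuous h.
  move=> c.
  have h1 : Q (L y) @[y --> c] --> Q (L c).
    exact: (@continuous_comp _ _ _ L Q c (@mulmx_cont R m Km^T c) (Qc (L c))).
  have h2 : lam * psi (N1 y) @[y --> c] --> lam * psi (N1 c).
    exact: (cvgM (cvg_cst lam) (@comp_within m psi psic c)).
  exact: cvgD h1 h2.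
have [N0 hN0] := psiinf (h 0 / lam + 1).
have [c0 hc0] : exists c0, forall c, h c0 <= h c.
  apply: (@coercive_min R m h (Num.max N0 0)) => //; first by rewrite le_max lexx orbT.
  move=> c; rewrite gt_max => /andP[/ltW hcN _].
  have := hN0 _ hcN; rewrite /h.
  have := Q0 (L c); have := lam0.
  move=> l0 q0 hp.
  have : lam * (h 0 / lam + 1) <= lam * psi (N1 c) by rewrite ler_wpM2l // ltW.
  rewrite mulrDr mulrCA divff ?gt_eqF // mulr1 /h.
  lra.
have [p0 [n0 [hp0 htv0]]] := discrete_meas x (fun k => c0 ord0 k) dual.
exists c0, p0, n0; split.
  by move=> y; rewrite /fmu hp0 //; exact: Ksec.
have tv0 : 0 <= tvar p0 n0 by rewrite -(dual.2 p0 n0) opnorm_ge0.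
have rowE : \row_j fmu K p0 n0 (x j) = L c0.
  apply/rowP => j; rewrite !mxE /fmu hp0; last exact: Ksec.
  by apply: eq_bigr => k _; rewrite !mxE.
move=> p n; rewrite rowE.
apply: (@le_trans _ _ (h c0)).
  rewrite /h lerD2l; apply: ler_wpM2l; first exact: ltW.
  by apply: psimon => //.
pose v := \col_j fmu K p n (x j).
pose c := (invmx Km *m v)^T.
have Lc : L c = \row_j fmu K p n (x j).
  rewrite /L /c -trmx_mul mulmxA mulmxV // mul1mx.
  by apply/rowP => j; rewrite !mxE.
apply: le_trans (hc0 c) _; rewrite /h Lc lerD2l; apply: ler_wpM2l; first exact: ltW.
apply: psimon => //.
have cE i : c ord0 i = sint p n (fun t => \sum_(k < m) invmx Km i k * K t (x k)).
  rewrite /c !mxE sint_sum; last by move=> k; apply: bmZ; exact: C0_bm (Ksec _).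
  by apply: eq_bigr => k _; rewrite mxE sintZ //; exact: C0_bm (Ksec _).
pose g t := \sum_(i < m) Num.sg (c ord0 i) * \sum_(k < m) invmx Km i k * K t (x k).
have bmg : bm g.
  apply: bm_sum => i; apply: bmZ; apply: bm_sum => k; apply: bmZ; exact: C0_bm (Ksec _).
have N1E : N1 c = sint p n g.
  rewrite /N1 /g sint_sum; last first.
    by move=> i; apply: bmZ; apply: bm_sum => k; apply: bmZ; exact: C0_bm (Ksec _).
  apply: eq_bigr => i _; rewrite sintZ; last first.
    by apply: bm_sum => k; apply: bmZ; exact: C0_bm (Ksec _).
  by rewrite -cE normrEsg.
have g1 t : `|g t| <= 1.
  apply: le_trans (ler_norm_sum _ _ _) _.
  apply: le_trans (hb m x xinj t).
  apply: ler_sum => i _; rewrite normrM.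
  have -> : (invmx (Kmx K x) *m Kcol K x t) i ord0 = \sum_(k < m) invmx Km i k * K t (x k).
    by rewrite mxE; apply: eq_bigr => k _; rewrite mxE.
  rewrite -[X in _ <= X]mul1r ler_wpM2r //.
  by rewrite normr_sg; case: (_ == 0).
rewrite N1E; apply: le_trans (ler_norm _) _; exact: sint_tvar.
Qed.
End F.

Section G.
Variables (R : realType) (X : ptopologicalType) (K : X -> X -> R).

Lemma sep_pts : K_nonsingular K -> forall p q : X, p != q -> exists z, K p z != K q z.
Proof.
move=> Kns p q npq; apply/not_existsP => hall.
pose pts := fun i : 'I_2 => if i == ord0 then p else q.
have inj : injective pts.
  move=> i j; rewrite /pts.
  case: (i =P ord0) => [->|/eqP i0]; case: (j =P ord0) => [->|/eqP j0] //.
  - by move=> pq; rewrite pq eqxx in npq.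
  - by move=> qp; rewrite qp eqxx in npq.
  move=> _; apply/val_inj; case: i i0 => [[|[|//]] ?] //; case: j j0 => [[|[|//]] ?] //.
have := Kns 2 pts inj; rewrite unitmxE -det_tr.
rewrite (@determinant_alternate _ _ _ ord0 (lift ord0 ord0)) ?unitr0 //.
move=> j; rewrite !mxE /pts /=.
by have /negP := hall (pts j); rewrite negbK => /eqP.
Qed.

Lemma X_hausdorff : K_sections_C0 K -> K_nonsingular K -> hausdorff_space X.
Proof.
move=> Ksec Kns p q clpq; apply/eqP/negPn/negP => npq.
have [z /negP hz] := sep_pts Kns npq; apply: hz; apply/eqP.
have hc := (Ksec z).1.
apply: Rhausdorff => A B hA hB.
have [t [tA tB]] := clpq _ _ (hc p _ hA) (hc q _ hB).
by exists (K t z).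
Qed.

Lemma C0N (g : X -> R) : C0 g -> C0 (fun t => - g t).
Proof.
move=> [gc gk]; split; first by move=> x; apply: continuousN; exact: gc.
by move=> e e0; under eq_set do rewrite normrN; exact: gk.
Qed.

Lemma clopen_gt (hX : hausdorff_space X) (g : X -> R) b : C0 g -> 0 < b ->
  [/\ open [set t | b < g t], closed [set t | b < g t] & compact [set t | b < g t]].
Proof.
move=> [gc gk] b0.
have cl : closed [set t | b < g t].
  have -> : [set t | b < g t] = [set t | b < `|g t|] `&` (g @^-1` [set r : R | 0 <= r]).
    apply/seteqP; split => t /=.
      move=> h; have g0 : 0 <= g t by rewrite (le_trans (ltW b0)) // ltW.
      by rewrite ger0_norm.
    by move=> [h g0]; rewrite -(ger0_norm g0).
  apply: closedI; first exact: compact_closed (gk b b0).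
  have h0 : closed [set r : R | 0 <= r] by exact: (@closed_ge R 0).
  exact: (continuous_closedP _).1 gc _ h0.
split => //.
  have -> : [set t | b < g t] = g @^-1` `]b, +oo[%classic.
    by apply/seteqP; split => t /=; rewrite in_itv /= andbT.
  by apply: open_comp => //; move=> t _; exact: gc.
apply: subclosed_compact cl (gk b b0) _ => t /= h.
exact: lt_le_trans h (ler_norm _).
Qed.

Lemma sep_lt (hX : hausdorff_space X) (g : X -> R) p q : C0 g -> g q < g p ->
  exists V : set X, [/\ open V, closed V, V p & ~ V q].
Proof.
move=> hg gqp; have [gp0|gp0] := ltP 0 (g p).
  pose b := Num.max (g q) (g p / 2).
  have b0 : 0 < b by rewrite lt_max; apply/orP; right; rewrite divr_gt0.
  have [ho hcl _] := clopen_gt hX hg b0.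
  exists [set t | b < g t]; split => //=.
    by rewrite gt_max gqp /=; lra.
  by rewrite gt_max ltxx.
pose b := Num.max (- g p) (- g q / 2).
have b0 : 0 < b by rewrite lt_max; apply/orP; right; rewrite divr_gt0 //; lra.
have [ho hcl _] := clopen_gt hX (C0N hg) b0.
exists (~` [set t | b < - g t]); split => //=.
- by rewrite openC.
- by rewrite closedC.
- by rewrite gt_max ltxx.
- by move=> H; apply: H; rewrite gt_max; apply/andP; split; lra.
Qed.

Lemma sep_ne (hX : hausdorff_space X) (g : X -> R) p q : C0 g -> g p != g q ->
  exists V : set X, [/\ open V, closed V, V p & ~ V q].
Proof.
move=> hg; rewrite neq_lt => /orP[h|h]; last exact: (sep_lt hX hg h).
have [V [ho hcl Vq nVp]] := sep_lt hX hg h.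
exists (~` V); split => //.
- by rewrite openC.
- by rewrite closedC.
Qed.

End G.

Section H.
Variables (R : realType) (X : ptopologicalType) (K : X -> X -> R).

Definition clopen (A : set X) := open A /\ closed A.

Lemma clopenI (A B : set X) : clopen A -> clopen B -> clopen (A `&` B).
Proof. by move=> [oA cA] [oB cB]; split; [exact: openI|exact: closedI]. Qed.

Lemma clopenC (A : set X) : clopen A -> clopen (~` A).
Proof. by move=> [oA cA]; split; [rewrite openC|rewrite closedC]. Qed.

Lemma clopen_seq (I : eqType) (r : seq I) (A : I -> set X) :
  (forall i, i \in r -> clopen (A i)) -> clopen [set t | forall i, i \in r -> A i t].
Proof.
elim: r => [|a r IH] hA.
  rewrite (_ : [set t | _] = setT); first by split; [exact: openT|exact: closedT].
  by apply/seteqP; split => // t _ i.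
have -> : [set t | forall i, i \in a :: r -> A i t] = A a `&` [set t | forall i, i \in r -> A i t].
  apply/seteqP; split => t /=.
    move=> h; split; first by apply: h; rewrite inE eqxx.
    by move=> i ir; apply: h; rewrite inE ir orbT.
  by move=> [ha hr] i; rewrite inE => /orP[/eqP->|]; [exact: ha | exact: hr].
apply: clopenI; first by apply: hA; rewrite inE eqxx.
by apply: IH => i ir; apply: hA; rewrite inE ir orbT.
Qed.

Lemma clopen_fin (I : finType) (P : pred I) (A : I -> set X) :
  (forall i, P i -> clopen (A i)) -> clopen [set t | forall i, P i -> A i t].
Proof.
move=> hA; have := @clopen_seq _ [seq i <- enum I | P i] A.
have -> : [set t | forall i, i \in [seq i <- enum I | P i] -> A i t] =
          [set t | forall i, P i -> A i t].
  apply/seteqP; split => t /= h i; first by move=> Pi; apply: h; rewrite mem_filter Pi mem_enum.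
  by rewrite mem_filter mem_enum andbT => /h.
apply=> i; rewrite mem_filter mem_enum andbT; exact: hA.
Qed.

Lemma compact_seq (I : eqType) (r : seq I) (A : I -> set X) :
  (forall i, compact (A i)) -> compact [set t | exists i, i \in r /\ A i t].
Proof.
elim: r => [|a r IH] hA.
  rewrite (_ : [set t | _] = set0); first exact: compact0.
  by apply/seteqP; split => // t [i []].
have -> : [set t | exists i, i \in a :: r /\ A i t] = A a `|` [set t | exists i, i \in r /\ A i t].
  apply/seteqP; split => t /=.
    move=> [i []]; rewrite inE => /orP[/eqP->|ir] hi; [by left | by right; exists i].
  by move=> [ha|[i [ir hi]]]; [exists a; rewrite inE eqxx | exists i; rewrite inE ir orbT].
by apply: compactU; [exact: hA | exact: IH].
Qed.

Lemma compact_fin (I : finType) (P : pred I) (A : I -> set X) :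
  (forall i, compact (A i)) -> compact [set t | exists i, P i /\ A i t].
Proof.
move=> hA; have := @compact_seq _ [seq i <- enum I | P i] A hA.
have -> // : [set t | exists i, i \in [seq i <- enum I | P i] /\ A i t] =
          [set t | exists i, P i /\ A i t].
apply/seteqP; split => t /= [i [h1 h2]]; exists i; split => //.
  by move: h1; rewrite mem_filter => /andP[].
by rewrite mem_filter mem_enum h1.
Qed.

Lemma cont_ind (A : set X) : clopen A -> continuous (fun t => \1_A t : R).
Proof.
move=> [oA cA] t B hB; have B1 : B (\1_A t) := nbhs_singleton hB.
case: (pselect (A t)) => At.
  have nA : nbhs t A by apply: open_nbhs_nbhs.
  apply: filterS nA => y Ay /=; move: B1.
  by rewrite !indicE (mem_set Ay) (mem_set At).
have nA : nbhs t (~` A) by apply: open_nbhs_nbhs; split => //; rewrite openC.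
apply: filterS nA => y Ay /=; move: B1.
by rewrite !indicE (memNset Ay) (memNset At).
Qed.

Lemma cont_sum (I : Type) (r : seq I) (F : I -> X -> R) :
  (forall i, continuous (F i)) -> continuous (fun t => \sum_(i <- r) F i t).
Proof.
elim: r => [|a r IH] hF.
  by rewrite (_ : (fun t => _) = fun _ => 0); [exact: cst_continuous|apply/funext=> t; rewrite big_nil].
rewrite (_ : (fun t => _) = fun t => F a t + \sum_(i <- r) F i t); last first.
  by apply/funext => t; rewrite big_cons.
by move=> t; exact: (cvgD (hF a t) (IH hF t)).
Qed.

End H.

Section I.
Variables (R : realType) (X : ptopologicalType) (K : X -> X -> R).

Lemma test_fun : K_sections_C0 K -> K_nonsingular K ->
  forall m (x : 'I_m -> X), injective x -> forall s : 'I_m -> R,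
  (forall j, `|s j| <= 1) ->
  exists f, [/\ C0 f, supnorm f <= 1 & forall j, f (x j) = s j].
Proof.
move=> Ksec Kns m x xinj s s1.
have hX := X_hausdorff Ksec Kns.
have Kd j : K (x j) (x j) != 0.
  apply/negP => /eqP h0.
  have inj1 : injective (fun _ : 'I_1 => x j) by move=> a b _; rewrite (ord1 a) (ord1 b).
  have := Kns 1 (fun _ => x j) inj1.
  rewrite (_ : Kmx K (fun _ => x j) = 0) ?unitmxE ?det0 ?unitr0 //.
  by apply/matrixP => a b; rewrite !mxE h0.
pose C j := [set t | `|K (x j) (x j)| / 2 < `|K t (x j)|].
have b0 j : 0 < `|K (x j) (x j)| / 2 by rewrite divr_gt0 // normr_gt0.
have Ck j : compact (C j) by exact: (Ksec (x j)).2 _ (b0 j).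
have Cc j : clopen (C j).
  split; last exact: compact_closed (Ck j).
  have -> : C j = (fun t => `|K t (x j)|) @^-1` `]`|K (x j) (x j)| / 2, +oo[%classic.
    by apply/seteqP; split => t /=; rewrite in_itv /= andbT.
  apply: open_comp => // t _.
  exact: (cvg_norm ((Ksec (x j)).1 t)).
have Cx j : C j (x j).
  rewrite /C /= ltr_pdivrMr // ltr_pMr ?normr_gt0 //; lra.
have hV : forall ji : 'I_m * 'I_m, exists V : set X,
    ji.1 != ji.2 -> [/\ clopen V, V (x ji.1) & ~ V (x ji.2)].
  move=> [j i] /=; case: (eqVneq j i) => [_|ne]; first by exists setT.
  have xne : x j != x i by apply: contra ne => /eqP /xinj ->.
  have [z hz] := sep_pts Kns xne.
  have [V [oV cV Vj nVi]] := sep_ne hX (Ksec z) hz.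
  by exists V.
have [V hV'] := choice hV.
pose W j := [set t | C j t /\ forall i, i != j -> V (j, i) t].
pose D j := [set t | W j t /\ forall i : 'I_m, (i < j)%N -> ~ W i t].
have Wc j : clopen (W j).
  have -> : W j = C j `&` [set t | forall i, i != j -> V (j, i) t] by [].
  apply: clopenI => //; apply: clopen_fin => i ij.
  have ji : (j, i).1 != (j, i).2 by rewrite /= eq_sym.
  by have [] := hV' (j, i) ji.
have Dc j : clopen (D j).
  have -> : D j = W j `&` [set t | forall i : 'I_m, (i < j)%N -> (~` W i) t] by [].
  by apply: clopenI => //; apply: clopen_fin => i _; apply: clopenC.
have Dk j : compact (D j).
  apply: subclosed_compact (Dc j).2 (Ck j) _.
  by move=> t [[]].
have Dx j : D j (x j).
  split; first split; first exact: Cx.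
    move=> i ij; have ji : (j, i).1 != (j, i).2 by rewrite /= eq_sym.
    by have [] := hV' (j, i) ji.
  move=> i ilt [_ hw].
  have ji : j != i by apply/eqP => ji; rewrite ji ltnn in ilt.
  have ij : i != j by rewrite eq_sym.
  by have [_ _] := hV' (i, j) ij; apply; apply: hw.
have Ddisj i j t : D i t -> D j t -> i = j.
  move=> [Wi hi] [Wj hj]; apply/val_inj/eqP; case: ltngtP => // h.
    by exfalso; apply: hj h Wi.
  by exfalso; apply: hi h Wj.
pose f t := \sum_(j < m) s j * \1_(D j) t.
have fD j t : D j t -> f t = s j.
  move=> Djt; rewrite /f (bigD1 j) //= indicE mem_set // mulr1 big1 ?addr0 // => i ij.
  rewrite indicE; case: (boolP (t \in D i)) => [/set_mem Dit|_]; last by rewrite mulr0.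
  by have := Ddisj _ _ _ Dit Djt => /eqP; rewrite (negbTE ij).
have fN t : (forall j, ~ D j t) -> f t = 0.
  by move=> h; rewrite /f big1 // => j _; rewrite indicE memNset ?mulr0.
have f1 t : `|f t| <= 1.
  case: (pselect (exists j, D j t)) => [[j Djt]|nD]; first by rewrite (fD j t Djt).
  by rewrite fN ?normr0 // => j Djt; apply: nD; exists j.
exists f; split.
- split.
    apply: (@cont_sum _ _ _ (index_enum 'I_m) (fun j t => s j * \1_(D j) t)) => j t.
    have h0 : continuous (fun y => \1_(D j) y : R) := cont_ind (Dc j).
    have h := h0 t.
    have h2 := cvgMl_tmp (a := s j) h.
    exact: h2.
  move=> e e0.
  have -> : [set t | e < `|f t|] = [set t | exists j, (e < `|s j|) /\ D j t].
    apply/seteqP; split => t /=.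
      case: (pselect (exists j, D j t)) => [[j Djt]|nD] h.
        by exists j; rewrite -(fD j t Djt).
      by rewrite fN ?normr0 in h; [lra | move=> j Djt; apply: nD; exists j].
    by move=> [j [h Djt]]; rewrite (fD j t Djt).
  by apply: (compact_fin (P := fun j => e < `|s j|)).
- exact: supnorm_le.
- by move=> j; exact: fD (Dx j).
Qed.
End I.

Section J.
Variables (R : realType) (X : ptopologicalType) (K : X -> X -> R).
Notation fmeas := {finite_measure set Borel X -> \bar R}.

Lemma dens_eq : K_sections_C0 K -> K_span_dense K ->
  forall (p0 n0 : fmeas) m (x : 'I_m -> X) (c : 'I_m -> R),
  (forall y, fmu K p0 n0 y = \sum_(k < m) c k * K (x k) y) ->
  forall f, C0 f -> sint p0 n0 f = \sum_(k < m) c k * f (x k).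
Proof.
move=> Ksec dense p0 n0 m x c hfmu f hf.
set P := fine (p0 setT) + fine (n0 setT).
set Sc := \sum_(k < m) `|c k|.
have P0 : 0 <= P by rewrite addr_ge0 // fine_ge0.
have Sc0 : 0 <= Sc by rewrite sumr_ge0.
have key e : 0 < e -> `|sint p0 n0 f - \sum_(k < m) c k * f (x k)| <= (P + Sc) * e.
  move=> e0; have [k [a [y hy]]] := dense f hf e e0.
  pose g t := \sum_(i < k) a i * K t (y i).
  have bg : bm g by apply: bm_sum => i; apply: bmZ; exact: C0_bm (Ksec _).
  have bf := C0_bm hf.
  have bd : bm (fun t => f t - g t).
    by apply: bmD => //; have := bmZ (-1) bg; under eq_fun do rewrite mulN1r.
  have [Md hMd] := bd.2.
  set sn := supnorm (fun t => f t - g t).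
  have hsn t : `|f t - g t| <= sn by exact: supnorm_ge hMd.
  have e1 : sint p0 n0 f = sint p0 n0 (fun t => f t - g t) + sint p0 n0 g.
    rewrite -sintD //; congr sint; apply/funext => t.
    by rewrite subrK.
  have e2 : sint p0 n0 g = \sum_(k0 < m) c k0 * g (x k0).
    rewrite /g sint_sum; last by move=> i; apply: bmZ; exact: C0_bm (Ksec _).
    rewrite (eq_bigr (fun i => a i * fmu K p0 n0 (y i))); last first.
      by move=> i _; rewrite sintZ //; exact: C0_bm (Ksec _).
    under eq_bigr do rewrite hfmu.
    under [RHS]eq_bigr do rewrite mulr_sumr.
    rewrite exchange_big /=; apply: eq_bigr => i _; rewrite mulr_sumr.
    by apply: eq_bigr => j _; rewrite mulrCA.
  have e3 : sint p0 n0 f - \sum_(k0 < m) c k0 * f (x k0) =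
      sint p0 n0 (fun t => f t - g t) - \sum_(k0 < m) c k0 * (f (x k0) - g (x k0)).
    rewrite e1 e2; under [in RHS]eq_bigr do rewrite mulrBr.
    rewrite sumrB; lra.
  rewrite e3; apply: le_trans (ler_normB _ _) _.
  rewrite mulrDl; apply: lerD.
    apply: le_trans (sint_bound p0 n0 bd.1 hsn) _.
    by rewrite ler_wpM2l // ltW.
  apply: le_trans (ler_norm_sum _ _ _) _; rewrite /Sc mulr_suml; apply: ler_sum => i _.
  rewrite normrM; apply: ler_pM => //; apply: le_trans (hsn _) (ltW hy).
apply/eqP; rewrite -subr_eq0 -normr_eq0; apply/eqP.
set d := `|_|.
have d0 : 0 <= d by rewrite /d normr_ge0.
apply: le_anti; rewrite d0 andbT leNgt; apply/negP => dpos.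
have hpos : 0 < 2 * (P + Sc + 1) by lra.
have ee : 0 < d / (2 * (P + Sc + 1)) by rewrite divr_gt0.
have := key _ ee.
rewrite -/d => hle.
have : (P + Sc) * (d / (2 * (P + Sc + 1))) < d.
  rewrite mulrA ltr_pdivrMr //; nra.
lra.
Qed.
End J.

Section K.
Variables (R : realType) (X : ptopologicalType) (K : X -> X -> R).
Notation fmeas := {finite_measure set Borel X -> \bar R}.

Lemma a_to_b : dual_C0_is_M R X -> K_sections_C0 K -> K_span_dense K ->
  K_nonsingular K -> linear_representer K -> l1_condition K.
Proof.
move=> dual Ksec dense Kns ha m x xinj y.
set Km := Kmx K x.
have Ku : Km \in unitmx := Kns m x xinj.
set c0 := invmx Km *m Kcol K x y.
rewrite leNgt; apply/negP => H1.
set Lsum := \sum_(i < m) \sum_(k < m) `|invmx Km i k|.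
have Lsum0 : 0 <= Lsum by rewrite sumr_ge0 // => i _; rewrite sumr_ge0.
pose r : 'rV[R]_m := \row_j K y (x j).
pose Q (v : 'rV[R]_m) := Lsum * \sum_(j < m) `|(v - r) ord0 j|.
have Qc : continuous Q.
  move=> v.
  have sh : continuous (fun w : 'rV[R]_m => w - r).
    apply: (@lip_cont _ _ _ _ 1) => // a b; rewrite mul1r.
    by have -> : a - r - (b - r) = a - b by rewrite opprB addrA subrK.
  have h1 := @continuous_comp _ _ _ (fun w : 'rV[R]_m => w - r)
     (fun w : 'rV[R]_m => \sum_(j < m) `|w ord0 j|) v (sh v) (@sum_abs_cont R m (v - r)).
  exact: (cvgMl_tmp (a := Lsum) h1).
have Q0 v : 0 <= Q v by rewrite mulr_ge0 // sumr_ge0.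
pose psi := fun t : R => t.
have psic : {within [set t | 0 <= t], continuous psi}.
  by apply: continuous_subspaceT => t; exact: cvg_id.
have [c [p0 [n0 [hfmu hmin]]]] := ha m x xinj Q Qc Q0 psi psic
  (fun t t0 => t0) (fun s t _ st => st) (fun M => ex_intro _ M (fun t h => h)) 1 ltr01.
have [p1 [n1 [hp1 htv1]]] := discrete_meas (fun _ : 'I_1 => y) (fun _ => 1) dual.
have row1 : \row_j fmu K p1 n1 (x j) = r.
  apply/rowP => j; rewrite !mxE /fmu hp1; last exact: Ksec.
  by rewrite big_ord1 mul1r.
have Qr : Q r = 0.
  rewrite /Q big1 ?mulr0 // => j _; rewrite !mxE subrr normr0 //.
have tv1 : tvar p1 n1 <= 1 by move: htv1; rewrite big_ord1 normr1.
have hm := hmin p1 n1; rewrite row1 Qr add0r /psi !mul1r in hm.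
have sg1 : forall j, `|Num.sg (c ord0 j)| <= 1.
  by move=> j; rewrite normr_sg; case: (_ == 0).
have [f [hf f1 fx]] := test_fun Ksec Kns xinj sg1.
have hs := dens_eq Ksec dense hfmu hf.
have tv0 : \sum_(k < m) `|c ord0 k| <= tvar p0 n0.
  rewrite -(dual.2 p0 n0); apply: le_trans (opnorm_ub p0 n0 hf f1).
  rewrite hs; apply: le_trans _ (ler_norm _).
  rewrite [X in _ <= X](eq_bigr (fun k => `|c ord0 k|)) // => k _.
  by rewrite fx normrEsg mulrC.
pose Ev : 'cV[R]_m := Km *m c^T - Kcol K x y.
have EvE j : Ev j ord0 = (\row_j fmu K p0 n0 (x j) - r) ord0 j.
  rewrite !mxE hfmu; congr (_ - _).
  by apply: eq_bigr => k _; rewrite !mxE mulrC.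
have QE : Q (\row_j fmu K p0 n0 (x j)) = Lsum * \sum_(j < m) `|Ev j ord0|.
  by rewrite /Q; congr (_ * _); apply: eq_bigr => j _; rewrite EvE.
have c0E i : c0 i ord0 = c ord0 i - (invmx Km *m Ev) i ord0.
  have : invmx Km *m Ev = c^T - c0 by rewrite mulmxBr mulKmx.
  by move=> ->; rewrite !mxE; lra.
have bnd : \sum_(i < m) `|c0 i ord0| <=
    \sum_(k < m) `|c ord0 k| + Lsum * \sum_(j < m) `|Ev j ord0|.
  rewrite /Lsum mulr_suml -big_split /=; apply: ler_sum => i _.
  rewrite c0E; apply: le_trans (ler_normB _ _) _; apply: lerD => //.
  rewrite mxE; apply: le_trans (ler_norm_sum _ _ _) _; rewrite mulr_suml.
  apply: ler_sum => k _; rewrite normrM; apply: ler_wpM2l => //.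
  by rewrite (bigD1 k) //= lerDl sumr_ge0.
move: hm; rewrite QE => hm.
have : \sum_(i < m) `|c0 i ord0| <= 1 by lra.
by rewrite leNgt H1.
Qed.

Lemma main_equiv : dual_C0_is_M R X ->
  K_sections_C0 K -> K_span_dense K -> K_nonsingular K ->
  (linear_representer K <-> l1_condition K).
Proof.
move=> dual Ksec dense Kns; split.
  exact: a_to_b.
exact: b_to_a.
Qed.
End K.

Theorem theorem2p4 (R : realType) (X : ptopologicalType) (K : X -> X -> R) :
  dual_C0_is_M R X ->
  K_sections_C0 K -> K_span_dense K -> K_nonsingular K ->
  (linear_representer K <-> l1_condition K).
Proof. exact: main_equiv. Qed.
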